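(* There is a function $\varepsilon(n)=o(n)$ such that for all sufficiently large $n$ and all integers $k$ with $\sqrt n\le k\le n$, $$d(k,n)\le 2k\sqrt n-n+\varepsilon(n).$$
   Context: $[n]=\{1,\dots,n\}$; for $A\subset\mathbb Z$, $A-A=\{a-b:a,b\in A\}$. Define $d(k,n)=\max\{|A-A|: A\subseteq[n],\ |A|=k\}$. *)

(* Defs.v *)
From mathcomp Require Import all_boot all_order all_algebra.
From mathcomp Require Import reals.
Set Implicit Arguments. Unset Strict Implicit. Unset Printing Implicit Defensive.
Import Order.TTheory GRing.Theory Num.Theory.

(* A subset of [n] = {1,...,n} is represented as a set A of 'I_n.+1
   (values 0..n) not containing 0. *)
Definition subset_of_interval (n : nat) (A : {set 'I_n.+1}) : bool :=
  (ord0 \notin A).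

Definition diffset_card (n : nat) (A : {set 'I_n.+1}) : nat :=
  size (undup [seq ((val a)%:Z - (val b)%:Z)%R | a <- enum A, b <- enum A]).

Definition d (k n : nat) : nat :=
  \max_(A : {set 'I_n.+1} | subset_of_interval A && (#|A| == k)) diffset_card A.

(* Main.v *)
Require Import Defs.
From mathcomp Require Import all_boot all_order all_algebra.
From mathcomp Require Import reals.
From mathcomp Require Import zify ring lra.
Import Order.TTheory GRing.Theory Num.Theory.


Lemma sum_eq2 N c e : (c < N)%N ->
  \sum_(j < N) ((c == j :> nat) * (e == j :> nat)) = (c == e).
Proof.
move=> Hc; rewrite (bigD1 (Ordinal Hc)) //= eqxx mul1n big1 ?addn0.
  by rewrite eq_sym.
move=> i Hi; suff -> : (c == i :> nat) = false by [].
apply/negbTE; apply: contra Hi => /eqP H; apply/eqP; apply: val_inj => /=; by rewrite H.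
Qed.

Lemma sum_eq1 N c : (c < N)%N -> \sum_(j < N) (c == j :> nat) = 1.
Proof.
move=> Hc; have := @sum_eq2 N c c Hc; rewrite eqxx /= => <-; apply: eq_bigr => j _.
by case: (c == j :> nat).
Qed.

Lemma sum_le1 N c : \sum_(j < N) (j == c :> nat) <= 1.
Proof.
case: (ltnP c N) => H.
  by rewrite -(@sum_eq1 N c H) leq_eqVlt; apply/orP; left; apply/eqP; apply: eq_bigr => j _; rewrite eq_sym.
rewrite big1 // => j _; suff -> : (j == c :> nat) = false by [].
apply/negbTE; rewrite neq_ltn; apply/orP; left; exact: leq_trans (ltn_ord j) H.
Qed.

Lemma CS N (x : 'I_N -> nat) : (\sum_i x i)^2 <= N * \sum_i (x i)^2.
Proof.
rewrite -mulnn big_distrlr /=.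
rewrite -(@leq_pmul2l 2) //.
have -> : 2 * (N * \sum_i x i ^ 2) = \sum_(i < N) \sum_(j < N) (x i ^ 2 + x j ^ 2).
  rewrite mul2n -addnn.
  rewrite [in RHS](eq_bigr (fun i => N * x i ^2 + \sum_(j < N) x j ^ 2)); last first.
    move=> i _; rewrite big_split /= sum_nat_const card_ord //.
  by rewrite big_split /= -big_distrr /= sum_nat_const card_ord.
rewrite big_distrr /=; apply: leq_sum => i _; rewrite big_distrr /=; apply: leq_sum => j _.
exact: (nat_Cauchy _ _).1.
Qed.

Lemma undup_sum (T : eqType) (f : T -> nat) m (l : seq T) :
  (forall x, f x <= m) ->
  \sum_(x <- l) f x + m * size (undup l) <= \sum_(x <- undup l) f x + m * size l.
Proof.
move=> Hf; elim: l => [|x l IH] //=.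
case: ifP => Hx /=; rewrite !big_cons /= ?mulnS; have := Hf x; lia.
Qed.

Definition G m (z : int) := \sum_(u < m) \sum_(v < m) ((v%:Z - u%:Z)%R == z).

Lemma G_le m z : G m z <= m.
Proof.
rewrite /G -[X in _ <= X]card_ord -sum1_card; apply: leq_sum => u _.
apply: leq_trans (@sum_le1 m `|(u%:Z + z)%R|%N); apply: leq_sum => v _.
case: eqP => // H; have -> : (v == `|(u%:Z + z)%R|%N :> nat). apply/eqP; lia. done.
Qed.

Lemma uniq_G m (U : seq int) : uniq U -> \sum_(z <- U) G m z <= m * m.
Proof.
move=> HU; rewrite /G exchange_big /=.
rewrite -[X in _ <= X * _]card_ord -sum_nat_const; apply: leq_sum => u _.
rewrite exchange_big /=.
rewrite -[X in _ <= X]card_ord -sum1_card; apply: leq_sum => v _.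
rewrite -big_mkcond /= sum1_count.
rewrite (eq_count (a2 := pred1 (v%:Z - u%:Z)%R)); last by move=> z /=; rewrite eq_sym.
by rewrite count_uniq_mem // leq_b1.
Qed.

Lemma key n (A : {set 'I_n.+1}) m : 0 < m ->
  (n + m) * diffset_card A <= (n + m) * m + #|A| * #|A| * n.
Proof.
move=> Hm.
set x := fun j : 'I_(n + m) => \sum_(a in A) \sum_(u < m) ((a + u)%N == j :> nat).
have E1 : \sum_j x j = #|A| * m.
  rewrite /x exchange_big /= -sum_nat_const; apply: eq_bigr => a _.
  rewrite exchange_big /= -[X in _ = X]card_ord -sum1_card; apply: eq_bigr => u _.
  apply: sum_eq1; have := ltn_ord a; have := ltn_ord u; lia.
set Ds := [seq ((val a)%:Z - (val b)%:Z)%R | a <- enum A, b <- enum A].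
have E2 : \sum_j (x j)^2 = \sum_(z <- Ds) G m z.
  rewrite /Ds big_allpairs_dep /=.
  rewrite (big_enum _ _ A) /= (eq_bigr (fun a : 'I_n.+1 => \sum_(b in A) G m ((val a)%:Z - (val b)%:Z)%R)); last first.
    by move=> a _; rewrite (big_enum _ _ A).
  transitivity (\sum_(j < n + m) \sum_(a in A) \sum_(b in A) \sum_(u<m) \sum_(v<m)
     (((a+u)%N == j :> nat) * ((b+v)%N == j :> nat))).
    apply: eq_bigr => j _; rewrite -mulnn /x.
    rewrite big_distrl /=; apply: eq_bigr => a _; rewrite big_distrr /=; apply: eq_bigr => b _.
    rewrite big_distrl /=; apply: eq_bigr => u _; by rewrite big_distrr.
  rewrite exchange_big; apply: eq_bigr => a _; rewrite exchange_big; apply: eq_bigr => b _.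
  rewrite /G exchange_big; apply: eq_bigr => u _; rewrite exchange_big; apply: eq_bigr => v _.
  rewrite sum_eq2; last by have := ltn_ord a; have := ltn_ord u; lia.
  have -> : val a = nat_of_ord a by []. have -> : val b = nat_of_ord b by [].
  by congr (nat_of_bool _); apply/eqP/eqP => H; lia.
have E3 : \sum_(z <- Ds) G m z + m * diffset_card A <= m * m + m * (#|A| * #|A|).
  have := @undup_sum _ (G m) m Ds (G_le m).
  have := @uniq_G m (undup Ds) (undup_uniq Ds).
  have -> : diffset_card A = size (undup Ds) by [].
  have -> : size Ds = #|A| * #|A| by rewrite size_allpairs -!cardE.
  by move=> h1 h2; apply: leq_trans h2 _; rewrite leq_add2r.
have := @CS _ x; rewrite E1 E2 => H.
move: E3 H; set Q := \sum_(z <- Ds) G m z; set D := diffset_card A; set k := #|A| => E3 H.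
have H2 : m * (k * k * m + (n + m) * D) <= m * ((n + m) * m + (n + m) * (k * k)).
  have := leq_mul (leqnn (n + m)) E3; move: H; rewrite expnMn !mulnn; nia.
rewrite leq_pmul2l // in H2; nia.
Qed.
Local Open Scope ring_scope.

Theorem theorem7 (R : realType) :
  exists eps : nat -> R,
    (forall e : R, 0 < e -> exists M : nat, forall n : nat, (M <= n)%N ->
        `|eps n| <= e * n%:R) /\
    exists N : nat, forall n k : nat, (N <= n)%N ->
      Num.sqrt (n%:R : R) <= k%:R -> (k <= n)%N ->
      (d k n)%:R <= 2 * k%:R * Num.sqrt (n%:R) - n%:R + eps n.
Proof.
exists (fun _ => 1); split.
  move=> e e0; exists (Num.truncn (e^-1)).+1 => n Hn.
  rewrite normr1.
  have h1 := truncnS_gt (e^-1).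
  have h2 : ((Num.truncn (e^-1)).+1%:R : R) <= n%:R by rewrite ler_nat.
  have h3 : e^-1 < n%:R by apply: lt_le_trans h1 h2.
  have : e * e^-1 <= e * n%:R by rewrite ler_pM2l // ltW.
  by rewrite mulfV ?gt_eqF.
exists 0%N => n k _ Hs Hk.
set s := Num.sqrt (n%:R : R).
have s0 : 0 <= s by apply: sqrtr_ge0.
have Hss : s * s = n%:R by rewrite -expr2 sqr_sqrtr ?ler0n.
have Hks : n%:R <= k%:R * s by rewrite -Hss ler_wpM2r.
set X := 2 * k%:R * s - n%:R + 1.
have n0 : (0 : R) <= n%:R by rewrite ler0n.
have X0 : 0 <= X by rewrite /X -mulrA; lra.
rewrite /d; apply: (big_ind (fun x : nat => x%:R <= X)) => //.
  by move=> x y hx hy; rewrite /maxn; case: ifP.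
move=> A /andP[_ /eqP HA].
set T := Num.truncn (k%:R * s).
have hT1 : (T%:R : R) <= k%:R * s by rewrite truncn_le mulr_ge0.
have hT2 : k%:R * s < T.+1%:R by apply: truncnS_gt.
have HnT : (n < T.+1)%N by rewrite -(ltr_nat R); apply: le_lt_trans hT2.
have := @key n A (T.+1 - n)%N; rewrite subn_gt0 HnT => /(_ isT).
rewrite subnKC ?(ltnW HnT) // HA -(ler_nat R) !natrD !natrM natrB ?(ltnW HnT) //.
set D := (diffset_card A)%:R.
move=> H.
have Hkk : (k%:R : R) * k%:R * n%:R = (k%:R * s) * (k%:R * s).
  by rewrite -Hss; ring.
rewrite Hkk in H.
have H2 : (k%:R * s) * (k%:R * s) <= (k%:R * s) * T.+1%:R.
  by rewrite ler_wpM2l ?mulr_ge0 // ltW.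
have H3 : (T.+1%:R : R) * D <= T.+1%:R * (T.+1%:R - n%:R + k%:R * s) by lra.
rewrite ler_pM2l ?ltr0Sn // in H3.
rewrite /X -mulrA; move: hT1; rewrite -addn1 natrD => hT1; move: H3; rewrite -addn1 natrD; lra.
Qed.
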